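(* Assume $\sum_{j=1}^\infty\beta_j^2<\infty$ and $|\rho|<1$. Then the limits $\kappa_i=\lim_{p\to\infty}\kappa_{i,p}$ satisfy (i) $\kappa_1=\beta(1)+2b_1(\rho)$; (ii) $\kappa_2=\beta(1)\frac{1+\rho^2}{1-\rho^2}-\beta(\rho^2)\frac{1}{1-\rho^2}+2\Big(b_1^{(1)}(\rho)+b_1(\rho)\frac{1+\rho^2}{1-\rho^2}-b_2(\rho)\frac{1}{1-\rho^2}\Big)$; (iii) $\kappa_3=\frac{1}{(1-\rho^2)^2}\big((1+4\rho^2+\rho^4)(\beta(1)+2b_1(\rho))-(1+3\rho^2)(\beta(\rho^2)+2b_2(\rho))\big)+\frac{1}{1-\rho^2}\big(3b_1^{(1)}(\rho)(1+\rho^2)-2(b_2^{(1)}(\rho)+\beta^{(1)}(\rho^2))\big)+b^{(2)}(\rho)$.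
   Context: $\kappa_{1,p}=\sum_{k,l=1}^p\beta_k\beta_l\rho^{|k-l|}$, $\kappa_{2,p}=\sum_{k=1}^p\big(\sum_{l=1}^p\beta_l\rho^{|k-l|}\big)^2$, $\kappa_{3,p}=\sum_{k,l,j,j'=1}^p\beta_j\beta_{j'}\rho^{|k-j|}\rho^{|l-j'|}\rho^{|k-l|}$. For $|x|\le1$: $\beta(x)=\sum_{j\ge1}\beta_j^2x^j$, $\beta^{(1)}(x)=\sum_{j\ge1}j\beta_j^2x^j$, $b_1(x)=\sum_{j'\ge2}\sum_{j=1}^{j'-1}\beta_j\beta_{j'}x^{j'-j}$, $b_2(x)=\sum_{j'\ge2}\sum_{j=1}^{j'-1}\beta_j\beta_{j'}x^{j'+j}$, $b_1^{(1)}(x)=\sum_{j'\ge2}\sum_{j=1}^{j'-1}\beta_j\beta_{j'}x^{j'-j}(j'-j)$, $b_2^{(1)}(x)=\sum_{j'\ge2}\sum_{j=1}^{j'-1}\beta_j\beta_{j'}x^{j'+j}(j'+j)$, $b^{(2)}(x)=\sum_{j'\ge2}\sum_{j=1}^{j'-1}\beta_j\beta_{j'}x^{j'-j}(j'-j)^2$. *)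

(* Defs.v *)
From Stdlib Require Import Reals Lra Lia.
From Coquelicot Require Import Coquelicot.
Open Scope R_scope.

(* Coefficient sequence: beta j is meaningful for j >= 1; beta 0 is never used. *)

Definition absdiff (k l : nat) : nat := if Nat.leb k l then (l - k)%nat else (k - l)%nat.

Definition sum1 (f : nat -> R) (p : nat) : R := sum_n_m f 1 p.

Definition kappa1 (beta : nat -> R) (rho : R) (p : nat) : R :=
  sum1 (fun k => sum1 (fun l => beta k * beta l * rho ^ absdiff k l) p) p.

Definition kappa2 (beta : nat -> R) (rho : R) (p : nat) : R :=
  sum1 (fun k => (sum1 (fun l => beta l * rho ^ absdiff k l) p) ^ 2) p.

Definition kappa3 (beta : nat -> R) (rho : R) (p : nat) : R :=
  sum1 (fun k => sum1 (fun l => sum1 (fun j => sum1 (fun j' =>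
    beta j * beta j' * rho ^ absdiff k j * rho ^ absdiff l j' * rho ^ absdiff k l) p) p) p) p.

Definition betaf (beta : nat -> R) (x : R) : R :=
  Series (fun n => let j := S n in beta j ^ 2 * x ^ j).

Definition betaf1 (beta : nat -> R) (x : R) : R :=
  Series (fun n => let j := S n in INR j * beta j ^ 2 * x ^ j).

Definition bsum (beta : nat -> R) (g : nat -> nat -> R) : R :=
  Series (fun n => let j' := (n + 2)%nat in
    sum_n_m (fun j => beta j * beta j' * g j j') 1 (j' - 1)).

Definition b1 (beta : nat -> R) (x : R) : R :=
  bsum beta (fun j j' => x ^ (j' - j)).
Definition b2 (beta : nat -> R) (x : R) : R :=
  bsum beta (fun j j' => x ^ (j' + j)).
Definition b1d (beta : nat -> R) (x : R) : R :=
  bsum beta (fun j j' => x ^ (j' - j) * INR (j' - j)).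
Definition b2d (beta : nat -> R) (x : R) : R :=
  bsum beta (fun j j' => x ^ (j' + j) * INR (j' + j)).
Definition b2nd (beta : nat -> R) (x : R) : R :=
  bsum beta (fun j j' => x ^ (j' - j) * INR (j' - j) ^ 2).

(* Main.v *)
Require Import Defs.
From Stdlib Require Import Reals Lra Lia Arith.
From Coquelicot Require Import Coquelicot.
Open Scope R_scope.


Lemma series_lim (a : nat -> R) : ex_series a -> is_lim_seq (sum_n a) (Series a).
Proof. intros H. apply Series_correct in H. exact H. Qed.

Lemma sum1_O f : sum1 f 0 = 0.
Proof. unfold sum1. rewrite sum_n_m_zero; auto. Qed.

Lemma sum1_S f p : sum1 f (S p) = sum1 f p + f (S p).
Proof. unfold sum1. rewrite sum_n_Sm; [reflexivity|lia]. Qed.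

Lemma sum1_ext_loc f g p : (forall j, (1 <= j <= p)%nat -> f j = g j) -> sum1 f p = sum1 g p.
Proof. induction p; intros H. rewrite !sum1_O; auto.
 rewrite !sum1_S, IHp, H; [reflexivity|lia|]. intros; apply H; lia. Qed.

Lemma sum1_ext f g p : (forall j, f j = g j) -> sum1 f p = sum1 g p.
Proof. intros; apply sum1_ext_loc; auto. Qed.

Lemma sum1_plus f g p : sum1 (fun j => f j + g j) p = sum1 f p + sum1 g p.
Proof. induction p. rewrite !sum1_O; ring. rewrite !sum1_S, IHp; ring. Qed.

Lemma sum1_minus f g p : sum1 (fun j => f j - g j) p = sum1 f p - sum1 g p.
Proof. induction p. rewrite !sum1_O; ring. rewrite !sum1_S, IHp; ring. Qed.

Lemma sum1_scal c f p : sum1 (fun j => c * f j) p = c * sum1 f p.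
Proof. induction p. rewrite !sum1_O; ring. rewrite !sum1_S, IHp; ring. Qed.

Lemma sum1_scal_r c f p : sum1 (fun j => f j * c) p = sum1 f p * c.
Proof. induction p. rewrite !sum1_O; ring. rewrite !sum1_S, IHp; ring. Qed.

Lemma sum1_zero p : sum1 (fun _ => 0) p = 0.
Proof. induction p. apply sum1_O. rewrite sum1_S, IHp; ring. Qed.

Lemma sum1_swap (f : nat -> nat -> R) p q :
  sum1 (fun i => sum1 (fun j => f i j) q) p = sum1 (fun j => sum1 (fun i => f i j) p) q.
Proof. induction p. rewrite sum1_O. symmetry. apply sum1_zero.
 rewrite sum1_S, IHp, <- sum1_plus. apply sum1_ext; intros; rewrite sum1_S; ring. Qed.

Lemma sum1_mult f g p q : sum1 f p * sum1 g q = sum1 (fun i => sum1 (fun j => f i * g j) q) p.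
Proof. rewrite <- sum1_scal_r. apply sum1_ext; intros. rewrite sum1_scal; ring. Qed.

Lemma sum1_le f g p : (forall j, (1 <= j <= p)%nat -> f j <= g j) -> sum1 f p <= sum1 g p.
Proof. induction p; intros H. rewrite !sum1_O; lra.
 rewrite !sum1_S. assert (f (S p) <= g (S p)) by (apply H; lia).
 assert (sum1 f p <= sum1 g p) by (apply IHp; intros; apply H; lia). lra. Qed.

Lemma sum1_abs f p : Rabs (sum1 f p) <= sum1 (fun j => Rabs (f j)) p.
Proof. induction p. rewrite !sum1_O, Rabs_R0; lra.
 rewrite !sum1_S. eapply Rle_trans; [apply Rabs_triang|lra]. Qed.

Lemma sum1_nonneg f p : (forall j, (1 <= j <= p)%nat -> 0 <= f j) -> 0 <= sum1 f p.
Proof. intros H. rewrite <- (sum1_zero p). apply sum1_le. auto. Qed.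

Lemma sum1_delta v j p : (1 <= j <= p)%nat -> sum1 (fun m => if Nat.eqb m j then v else 0) p = v.
Proof. induction p; intros H. lia. rewrite sum1_S.
 destruct (Nat.eq_dec j (S p)). subst. rewrite Nat.eqb_refl.
 rewrite (sum1_ext_loc _ (fun _ => 0)). rewrite sum1_zero; ring.
 intros m Hm. destruct (Nat.eqb_spec m (S p)); [lia|auto].
 rewrite IHp by lia. destruct (Nat.eqb_spec (S p) j); [lia|ring]. Qed.

Lemma sum1_shift_lo f q : sum1 (fun k => if Nat.ltb 1 k then f (k-1)%nat else 0) (S q) = sum1 f q.
Proof. induction q. rewrite sum1_S, !sum1_O. simpl. ring.
 rewrite sum1_S, IHq, sum1_S. destruct (Nat.ltb_spec 1 (S (S q))); [|lia].
 replace (S (S q) - 1)%nat with (S q) by lia. ring. Qed.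

Lemma sum1_shift_hi g q : sum1 (fun k => if Nat.ltb k (S q) then g k else 0) (S q) = sum1 g q.
Proof. rewrite sum1_S. destruct (Nat.ltb_spec (S q) (S q)); [lia|].
 rewrite Rplus_0_r. apply sum1_ext_loc. intros j Hj.
 destruct (Nat.ltb_spec j (S q)); [auto|lia]. Qed.


Lemma absdiff_sym a b : absdiff a b = absdiff b a.
Proof. unfold absdiff. destruct (Nat.leb_spec a b), (Nat.leb_spec b a); lia. Qed.

Definition A (rho:R) j k := rho ^ absdiff j k.
Definition K2 rho p j j' := sum1 (fun k => A rho j k * A rho k j') p.
Definition K3 rho p j j' := sum1 (fun k => A rho j k * K2 rho p k j') p.
Definition Q (b : nat -> R) (K : nat -> nat -> R) p :=
  sum1 (fun j => sum1 (fun j' => b j * b j' * K j j') p) p.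

Lemma A_sym rho a b : A rho a b = A rho b a.
Proof. unfold A; rewrite absdiff_sym; auto. Qed.

Lemma kappa1_Q beta rho p : kappa1 beta rho p = Q beta (A rho) p.
Proof. reflexivity. Qed.

Lemma kappa2_Q beta rho p : kappa2 beta rho p = Q beta (K2 rho p) p.
Proof. unfold kappa2, Q.
 rewrite (sum1_ext _ (fun k => sum1 (fun l => sum1 (fun l' =>
    beta l * beta l' * (A rho l k * A rho k l')) p) p)).
 - rewrite sum1_swap. apply sum1_ext; intros l.
   rewrite sum1_swap. apply sum1_ext; intros l'.
   unfold K2. rewrite <- sum1_scal. reflexivity.
 - intros k. replace (sum1 (fun l => beta l * rho ^ absdiff k l) p ^ 2) with
    (sum1 (fun l => beta l * rho ^ absdiff k l) p * sum1 (fun l => beta l * rho ^ absdiff k l) p) by ring.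
   rewrite sum1_mult. apply sum1_ext; intros l. apply sum1_ext; intros l'.
   rewrite (A_sym rho l k). unfold A. ring.
Qed.

Lemma kappa3_Q beta rho p : kappa3 beta rho p = Q beta (K3 rho p) p.
Proof. unfold kappa3, Q.
 rewrite (sum1_ext _ (fun k => sum1 (fun j => sum1 (fun l => sum1 (fun j' =>
    beta j * beta j' * rho ^ absdiff k j * rho ^ absdiff l j' * rho ^ absdiff k l) p) p) p)).
 2:{ intros k. apply sum1_swap. }
 rewrite (sum1_ext _ (fun k => sum1 (fun j => sum1 (fun j' => sum1 (fun l =>
    beta j * beta j' * rho ^ absdiff k j * rho ^ absdiff l j' * rho ^ absdiff k l) p) p) p)).
 2:{ intros k. apply sum1_ext; intros j. apply sum1_swap. }
 rewrite sum1_swap. apply sum1_ext; intros j.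
 rewrite sum1_swap. apply sum1_ext; intros j'.
 unfold K3, K2. rewrite <- sum1_scal. apply sum1_ext; intros k.
 rewrite <- !sum1_scal. apply sum1_ext; intros l.
 rewrite (absdiff_sym k j). unfold A. ring.
Qed.


Ltac ad := unfold absdiff; match goal with |- context [Nat.leb ?a ?b] => destruct (Nat.leb_spec a b) end; lia.

Definition Tv rho p (x : nat -> R) k :=
  ((1 + rho^2 - (if Nat.eqb k 1 then rho^2 else 0) - (if Nat.eqb k p then rho^2 else 0)) * x k
   - (if Nat.ltb 1 k then rho * x (k-1)%nat else 0)
   - (if Nat.ltb k p then rho * x (S k) else 0)) / (1 - rho^2).

Lemma coef_delta rho p j m : (1 <= j <= p)%nat -> (1 <= m <= p)%nat ->
  A rho j m * (1 + rho^2 - (if Nat.eqb m 1 then rho^2 else 0) - (if Nat.eqb m p then rho^2 else 0))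
  - (if Nat.ltb m p then A rho j (S m) * rho else 0)
  - (if Nat.ltb 1 m then A rho j (m-1)%nat * rho else 0)
  = if Nat.eqb m j then 1 - rho^2 else 0.
Proof. intros Hj Hm. unfold A.
 destruct (lt_eq_lt_dec m j) as [[Hlt|Heq]|Hgt].
 - destruct (Nat.eqb_spec m j); [lia|].
   destruct (Nat.ltb_spec m p); [|lia]. destruct (Nat.eqb_spec m p); [lia|].
   replace (absdiff j (S m)) with (j - S m)%nat by ad.
   replace (absdiff j m) with (S (j - S m)) by ad.
   destruct (Nat.eqb_spec m 1); destruct (Nat.ltb_spec 1 m); try lia.
   + simpl. ring.
   + replace (absdiff j (m-1)) with (S (S (j - S m))) by ad. simpl. ring.
 - subst m. rewrite Nat.eqb_refl.
   replace (absdiff j j) with 0%nat by ad.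
   replace (absdiff j (j-1)) with 1%nat by ad. replace (absdiff j (S j)) with 1%nat by ad.
   destruct (Nat.eqb_spec j 1); destruct (Nat.ltb_spec 1 j); destruct (Nat.eqb_spec j p);
   destruct (Nat.ltb_spec j p); try lia; simpl; ring.
 - destruct (Nat.eqb_spec m j); [lia|]. destruct (Nat.eqb_spec m 1); [lia|].
   destruct (Nat.ltb_spec 1 m); [|lia].
   replace (absdiff j (m-1)) with (m - 1 - j)%nat by ad.
   replace (absdiff j m) with (S (m - 1 - j)) by ad.
   destruct (Nat.eqb_spec m p); destruct (Nat.ltb_spec m p); try lia.
   + simpl; ring.
   + replace (absdiff j (S m)) with (S (S (m - 1 - j))) by ad. simpl; ring.
Qed.

Lemma Tv_inv rho p x j : rho^2 <> 1 -> (1 <= j <= p)%nat ->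
  sum1 (fun k => A rho j k * Tv rho p x k) p = x j.
Proof. intros Hr Hj. destruct p as [|q]; [lia|].
 assert (Hd : 1 - rho^2 <> 0) by lra.
 apply (Rmult_eq_reg_r (1 - rho^2)); [|auto].
 rewrite <- sum1_scal_r. unfold Tv.
 rewrite (sum1_ext _ (fun k =>
   A rho j k * ((1 + rho^2 - (if Nat.eqb k 1 then rho^2 else 0) - (if Nat.eqb k (S q) then rho^2 else 0)) * x k)
   - (if Nat.ltb 1 k then (fun m => A rho j (S m) * rho * x m) (k-1)%nat else 0)
   - (if Nat.ltb k (S q) then A rho j k * rho * x (S k) else 0))).
 2:{ intros k. field_simplify; [|auto]. destruct (Nat.ltb_spec 1 k); destruct (Nat.ltb_spec k (S q));
     try (replace (S (k-1)) with k by lia); field; auto. }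
 rewrite !sum1_minus. rewrite (sum1_shift_lo (fun m => A rho j (S m) * rho * x m) q), sum1_shift_hi.
 rewrite <- (sum1_shift_hi (fun m => A rho j (S m) * rho * x m)).
 rewrite <- (sum1_shift_lo (fun k => A rho j k * rho * x (S k))).
 rewrite <- !sum1_minus.
 rewrite (sum1_ext_loc _ (fun m => x m * (if Nat.eqb m j then 1 - rho^2 else 0))).
 - rewrite (sum1_ext _ (fun m => if Nat.eqb m j then x j * (1 - rho^2) else 0)).
   + rewrite sum1_delta; auto.
   + intros m. destruct (Nat.eqb_spec m j); [subst; ring|ring].
 - intros m Hm. rewrite <- (coef_delta rho (S q) j m) by lia.
   destruct (Nat.ltb_spec 1 m); destruct (Nat.ltb_spec m (S q)); try (replace (S (m-1)) with m by lia); ring.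
Qed.


Definition cc rho := (1 + rho^2) / (1 - rho^2).
Definition K2c rho p j j' :=
  rho ^ absdiff j j' * (cc rho + INR (absdiff j j'))
  - (rho ^ j * rho ^ j' + rho ^ (p - j) * rho ^ (p - j') * rho ^ 2) / (1 - rho^2).

Definition c1 rho := (1 + 4 * rho^2 + rho^4) / (1 - rho^2)^2.
Definition c2 rho := (1 + 3 * rho^2) / (1 - rho^2)^2.
Definition K3c rho p j j' :=
  rho ^ absdiff j j' * (c1 rho + 3/2 * cc rho * INR (absdiff j j') + INR (absdiff j j') ^ 2 / 2)
  - rho ^ j * rho ^ j' * (c2 rho + (INR j + INR j') / (1 - rho^2))
  - rho ^ (p - j) * rho ^ (p - j') * rho ^ 2 * (c2 rho + (INR (p - j) + INR (p - j') + 2) / (1 - rho^2))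
  + rho ^ (p - j) * rho ^ (p - j') * rho ^ 2 * (rho ^ j * rho ^ j + rho ^ j' * rho ^ j') / (1 - rho^2)^2.

Ltac fin := unfold cc, c1, c2; do 3 (repeat (rewrite plus_INR || rewrite S_INR || rewrite INR_0 || rewrite pow_add); cbn [pow]); field; repeat split; auto.

Lemma Tv_K2 rho p k j' : rho^2 <> 1 -> (1 <= k <= p)%nat -> (1 <= j' <= p)%nat ->
  Tv rho p (fun i => K2c rho p i j') k = A rho k j'.
Proof. intros Hr Hk Hj. assert (Hd : 1 - rho^2 <> 0) by lra.
 assert (Hd' : 1 - rho * (rho * 1) <> 0) by (simpl in Hd; lra).
 assert (Hd2 : 1 - rho * rho <> 0) by (simpl in Hd; lra).
 unfold Tv, K3c, K2c, A.
 destruct (lt_eq_lt_dec k j') as [[Hlt|Heq]|Hgt].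
 - destruct (Nat.eqb_spec k p); [lia|]. destruct (Nat.ltb_spec k p); [|lia].
   destruct (Nat.le_exists_sub (S k) j' Hlt) as [e [He _]].
   destruct (Nat.le_exists_sub j' p (proj2 Hj)) as [f [Hf _]].
   replace (absdiff k j') with (S e) by ad.
   replace (absdiff (S k) j') with e by ad.
   replace (p - k)%nat with (S e + f)%nat by lia.
   replace (p - S k)%nat with (e + f)%nat by lia.
   replace (p - j')%nat with f by lia.
   replace j' with (k + S e)%nat by lia.
   destruct (Nat.eqb_spec k 1); destruct (Nat.ltb_spec 1 k); try lia.
   + subst k. fin.
   + destruct k as [|K0]; [lia|].
     replace (absdiff (S K0 - 1) (S K0 + S e)) with (S (S e)) by ad.
     replace (p - (S K0 - 1))%nat with (S (S e + f)) by lia.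
     replace (S K0 - 1)%nat with K0 by lia. fin.
 - subst j'.
   destruct (Nat.le_exists_sub k p (proj2 Hk)) as [f [Hf _]].
   replace (absdiff k k) with 0%nat by ad.
   replace (absdiff (S k) k) with 1%nat by ad.
   replace (p - k)%nat with f by lia.
   destruct (Nat.eqb_spec k 1); destruct (Nat.ltb_spec 1 k); try lia;
   destruct (Nat.eqb_spec k p); destruct (Nat.ltb_spec k p); try lia.
   + subst k. replace f with 0%nat by lia. fin.
   + subst k. destruct f as [|f0]; [lia|]. replace (p - 2)%nat with f0 by lia. fin.
   + destruct k as [|K0]; [lia|].
     replace (absdiff (S K0 - 1) (S K0)) with 1%nat by ad.
     replace (p - (S K0 - 1))%nat with (S f) by lia.
     replace (S K0 - 1)%nat with K0 by lia. replace f with 0%nat by lia. fin.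
   + destruct k as [|K0]; [lia|].
     replace (absdiff (S K0 - 1) (S K0)) with 1%nat by ad.
     replace (p - (S K0 - 1))%nat with (S f) by lia.
     destruct f as [|f0]; [lia|]. replace (p - S (S K0))%nat with f0 by lia.
     replace (S K0 - 1)%nat with K0 by lia. fin.
 - destruct (Nat.eqb_spec k 1); [lia|]. destruct (Nat.ltb_spec 1 k); [|lia].
   destruct (Nat.le_exists_sub (S j') k Hgt) as [e [He _]].
   destruct (Nat.le_exists_sub k p (proj2 Hk)) as [f [Hf _]].
   replace (absdiff k j') with (S e) by ad.
   replace (absdiff (S k) j') with (S (S e)) by ad.
   replace (absdiff (k - 1) j') with e by ad.
   replace (p - k)%nat with f by lia.
   replace (p - (k - 1))%nat with (S f) by lia.
   replace (p - j')%nat with (S e + f)%nat by lia.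
   replace (k - 1)%nat with (j' + e)%nat by lia.
   replace k with (j' + S e)%nat by lia.
   destruct (Nat.eqb_spec (j' + S e) p); destruct (Nat.ltb_spec (j' + S e) p); try lia.
   + replace f with 0%nat by lia. fin.
   + destruct f as [|f0]; [lia|]. replace (p - S (j' + S e))%nat with f0 by lia. fin.
Qed.

Lemma Tv_K3 rho p k j' : rho^2 <> 1 -> (1 <= k <= p)%nat -> (1 <= j' <= p)%nat ->
  Tv rho p (fun i => K3c rho p i j') k = K2c rho p k j'.
Proof. intros Hr Hk Hj. assert (Hd : 1 - rho^2 <> 0) by lra.
 assert (Hd' : 1 - rho * (rho * 1) <> 0) by (simpl in Hd; lra).
 assert (Hd2 : 1 - rho * rho <> 0) by (simpl in Hd; lra).
 unfold Tv, K3c, K2c, A.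
 destruct (lt_eq_lt_dec k j') as [[Hlt|Heq]|Hgt].
 - destruct (Nat.eqb_spec k p); [lia|]. destruct (Nat.ltb_spec k p); [|lia].
   destruct (Nat.le_exists_sub (S k) j' Hlt) as [e [He _]].
   destruct (Nat.le_exists_sub j' p (proj2 Hj)) as [f [Hf _]].
   replace (absdiff k j') with (S e) by ad.
   replace (absdiff (S k) j') with e by ad.
   replace (p - k)%nat with (S e + f)%nat by lia.
   replace (p - S k)%nat with (e + f)%nat by lia.
   replace (p - j')%nat with f by lia.
   replace j' with (k + S e)%nat by lia.
   destruct (Nat.eqb_spec k 1); destruct (Nat.ltb_spec 1 k); try lia.
   + subst k. fin.
   + destruct k as [|K0]; [lia|].
     replace (absdiff (S K0 - 1) (S K0 + S e)) with (S (S e)) by ad.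
     replace (p - (S K0 - 1))%nat with (S (S e + f)) by lia.
     replace (S K0 - 1)%nat with K0 by lia. fin.
 - subst j'.
   destruct (Nat.le_exists_sub k p (proj2 Hk)) as [f [Hf _]].
   replace (absdiff k k) with 0%nat by ad.
   replace (absdiff (S k) k) with 1%nat by ad.
   replace (p - k)%nat with f by lia.
   destruct (Nat.eqb_spec k 1); destruct (Nat.ltb_spec 1 k); try lia;
   destruct (Nat.eqb_spec k p); destruct (Nat.ltb_spec k p); try lia.
   + subst k. replace f with 0%nat by lia. fin.
   + subst k. destruct f as [|f0]; [lia|]. replace (p - 2)%nat with f0 by lia. fin.
   + destruct k as [|K0]; [lia|].
     replace (absdiff (S K0 - 1) (S K0)) with 1%nat by ad.
     replace (p - (S K0 - 1))%nat with (S f) by lia.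
     replace (S K0 - 1)%nat with K0 by lia. replace f with 0%nat by lia. fin.
   + destruct k as [|K0]; [lia|].
     replace (absdiff (S K0 - 1) (S K0)) with 1%nat by ad.
     replace (p - (S K0 - 1))%nat with (S f) by lia.
     destruct f as [|f0]; [lia|]. replace (p - S (S K0))%nat with f0 by lia.
     replace (S K0 - 1)%nat with K0 by lia. fin.
 - destruct (Nat.eqb_spec k 1); [lia|]. destruct (Nat.ltb_spec 1 k); [|lia].
   destruct (Nat.le_exists_sub (S j') k Hgt) as [e [He _]].
   destruct (Nat.le_exists_sub k p (proj2 Hk)) as [f [Hf _]].
   replace (absdiff k j') with (S e) by ad.
   replace (absdiff (S k) j') with (S (S e)) by ad.
   replace (absdiff (k - 1) j') with e by ad.
   replace (p - k)%nat with f by lia.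
   replace (p - (k - 1))%nat with (S f) by lia.
   replace (p - j')%nat with (S e + f)%nat by lia.
   replace (k - 1)%nat with (j' + e)%nat by lia.
   replace k with (j' + S e)%nat by lia.
   destruct (Nat.eqb_spec (j' + S e) p); destruct (Nat.ltb_spec (j' + S e) p); try lia.
   + replace f with 0%nat by lia. fin.
   + destruct f as [|f0]; [lia|]. replace (p - S (j' + S e))%nat with f0 by lia. fin.
Qed.



Lemma K2_closed rho p j j' : rho^2 <> 1 -> (1 <= j <= p)%nat -> (1 <= j' <= p)%nat ->
  K2 rho p j j' = K2c rho p j j'.
Proof. intros Hr Hj Hj'. unfold K2.
 rewrite (sum1_ext_loc _ (fun k => A rho j k * Tv rho p (fun i => K2c rho p i j') k)).
 - apply (Tv_inv rho p (fun i => K2c rho p i j') j); auto.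
 - intros k Hk. rewrite Tv_K2; auto.
Qed.

Lemma K3_closed rho p j j' : rho^2 <> 1 -> (1 <= j <= p)%nat -> (1 <= j' <= p)%nat ->
  K3 rho p j j' = K3c rho p j j'.
Proof. intros Hr Hj Hj'. unfold K3.
 rewrite (sum1_ext_loc _ (fun k => A rho j k * Tv rho p (fun i => K3c rho p i j') k)).
 - apply (Tv_inv rho p (fun i => K3c rho p i j') j); auto.
 - intros k Hk. rewrite Tv_K3, K2_closed; auto.
Qed.

Lemma Q_ext_loc b K K' p : (forall j j', (1 <= j <= p)%nat -> (1 <= j' <= p)%nat -> K j j' = K' j j') ->
  Q b K p = Q b K' p.
Proof. intros H. unfold Q. apply sum1_ext_loc; intros j Hj. apply sum1_ext_loc; intros j' Hj'.
 rewrite H; auto. Qed.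

Lemma Q_plus b K E p : Q b (fun j j' => K j j' + E j j') p = Q b K p + Q b E p.
Proof. unfold Q. rewrite <- sum1_plus. apply sum1_ext; intros j.
 rewrite <- sum1_plus. apply sum1_ext; intros j'. ring. Qed.

Definition Tr (b : nat -> R) (g : nat -> nat -> R) p :=
  sum1 (fun j' => sum1 (fun j => b j * b j' * g j j') (j' - 1)) p.
Definition Dg (b : nat -> R) (h : nat -> R) p := sum1 (fun j => b j ^ 2 * h j) p.

Lemma Q_sym b K p : (forall j j', K j j' = K j' j) ->
  Q b K p = Dg b (fun j => K j j) p + 2 * Tr b K p.
Proof. intros Hs. unfold Q, Dg, Tr. induction p.
 - rewrite !sum1_O; ring.
 - rewrite !sum1_S. replace (S p - 1)%nat with p by lia.
   rewrite (sum1_ext (fun j => sum1 (fun j' => b j * b j' * K j j') (S p))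
      (fun j => sum1 (fun j' => b j * b j' * K j j') p + b j * b (S p) * K j (S p))).
   2:{ intros; apply sum1_S. }
   rewrite sum1_plus, IHp.
   rewrite (sum1_ext (fun j' => b (S p) * b j' * K (S p) j') (fun j => b j * b (S p) * K j (S p))).
   2:{ intros; rewrite Hs; ring. }
   ring.
Qed.

Lemma Tr_plus b g1 g2 p : Tr b (fun j j' => g1 j j' + g2 j j') p = Tr b g1 p + Tr b g2 p.
Proof. unfold Tr. rewrite <- sum1_plus. apply sum1_ext; intros j'.
 rewrite <- sum1_plus. apply sum1_ext; intros j. ring. Qed.
Lemma Tr_scal b c g p : Tr b (fun j j' => c * g j j') p = c * Tr b g p.
Proof. unfold Tr. rewrite <- sum1_scal. apply sum1_ext; intros j'.
 rewrite <- sum1_scal. apply sum1_ext; intros j. ring. Qed.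
Lemma Tr_ext_lt b g1 g2 p : (forall j j', (j < j')%nat -> g1 j j' = g2 j j') -> Tr b g1 p = Tr b g2 p.
Proof. intros H. unfold Tr. apply sum1_ext; intros j'. apply sum1_ext_loc; intros j Hj.
 rewrite H; [auto|lia]. Qed.
Lemma Dg_plus b h1 h2 p : Dg b (fun j => h1 j + h2 j) p = Dg b h1 p + Dg b h2 p.
Proof. unfold Dg. rewrite <- sum1_plus. apply sum1_ext; intros j. ring. Qed.
Lemma Dg_scal b c h p : Dg b (fun j => c * h j) p = c * Dg b h p.
Proof. unfold Dg. rewrite <- sum1_scal. apply sum1_ext; intros j. ring. Qed.

Lemma sum1_sum_n f p : sum1 f (S p) = sum_n (fun n => f (S n)) p.
Proof. unfold sum1, sum_n. rewrite sum_n_m_S. reflexivity. Qed.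

Lemma Dg_lim b h : ex_series (fun n => b (S n) ^ 2 * h (S n)) ->
  is_lim_seq (Dg b h) (Series (fun n => b (S n) ^ 2 * h (S n))).
Proof. intros H. apply is_lim_seq_incr_1.
 apply (is_lim_seq_ext (sum_n (fun n => b (S n) ^ 2 * h (S n)))).
 - intros n. unfold Dg. rewrite sum1_sum_n. reflexivity.
 - apply series_lim; auto.
Qed.

Lemma Tr_lim b g : ex_series (fun n => sum_n_m (fun j => b j * b (n + 2)%nat * g j (n + 2)%nat) 1 (n + 2 - 1)) ->
  is_lim_seq (Tr b g) (bsum b g).
Proof. intros H. unfold bsum. apply (is_lim_seq_incr_n _ 2).
 apply (is_lim_seq_ext (sum_n (fun n => sum_n_m (fun j => b j * b (n + 2)%nat * g j (n + 2)%nat) 1 (n + 2 - 1)))).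
 - intros n. unfold Tr. symmetry. replace (n + 2)%nat with (S (S n)) by lia.
   unfold sum1 at 1. rewrite sum_Sn_m by lia. simpl (1 - 1)%nat. rewrite sum1_O. change (plus 0 ?x) with (0 + x). rewrite Rplus_0_l.
   rewrite <- !sum_n_m_S. unfold sum_n. apply sum_n_m_ext. intros m.
   replace (m + 2)%nat with (S (S m)) by lia. replace (S (S m) - 1)%nat with (S m) by lia. reflexivity.
 - apply series_lim; auto.
Qed.


Lemma pow_le1 x n : 0 <= x <= 1 -> x ^ n <= 1.
Proof. intros H. induction n; simpl. lra. assert (0 <= x ^ n) by (apply pow_le; lra). nra. Qed.

Lemma pow_decr x m n : 0 <= x <= 1 -> (m <= n)%nat -> x ^ n <= x ^ m.
Proof. intros H Hmn. replace n with (m + (n - m))%nat by lia. rewrite pow_add.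
 assert (x ^ (n - m) <= 1) by (apply pow_le1; auto). assert (0 <= x ^ m) by (apply pow_le; lra).
 assert (0 <= x ^ (n - m)) by (apply pow_le; lra). nra. Qed.

Definition tt rho := sqrt (sqrt (Rabs rho)).
Definition MM rho := 1 / (1 - tt rho) ^ 2.

Lemma sqrt_lt1 x : 0 <= x < 1 -> 0 <= sqrt x < 1.
Proof. intros H. split. apply sqrt_pos. rewrite <- sqrt_1. apply sqrt_lt_1; lra. Qed.

Lemma tt_props rho : Rabs rho < 1 -> 0 <= tt rho < 1 /\ tt rho ^ 4 = Rabs rho.
Proof. intros H. unfold tt. assert (H0 := Rabs_pos rho).
 assert (H1 := sqrt_lt1 (Rabs rho) (conj H0 H)).
 split. apply sqrt_lt1; lra.
 replace 4%nat with (2 * 2)%nat by lia. rewrite pow_mult.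
 rewrite pow2_sqrt by lra. rewrite pow2_sqrt; lra. Qed.

Lemma lin_geo t n : 0 <= t < 1 -> (1 + INR n) * t ^ n * (1 - t) <= 1 - t ^ (S n).
Proof. intros Ht. induction n.
 - simpl. lra.
 - rewrite S_INR. assert (0 <= t ^ (S n) <= 1) by (split; [apply pow_le|apply pow_le1]; lra).
   assert (0 <= INR n) by apply pos_INR.
   replace (t ^ S (S n)) with (t * t ^ (S n)) by (simpl; ring).
   replace ((1 + (INR n + 1)) * t ^ S n * (1 - t)) with
     (t * ((1 + INR n) * t ^ n * (1 - t)) + t ^ S n * (1 - t)) by (simpl; ring).
   nra.
Qed.

Lemma lin_geo' t n : 0 <= t < 1 -> (1 + INR n) * t ^ n <= 1 / (1 - t).
Proof. intros Ht. assert (H := lin_geo t n Ht). assert (0 <= t ^ S n) by (apply pow_le; lra).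
 apply (Rmult_le_reg_r (1 - t)); [lra|]. replace (1 / (1 - t) * (1 - t)) with 1 by (field; lra). lra. Qed.

Lemma key rho n : Rabs rho < 1 -> Rabs rho ^ n * (1 + INR n) ^ 2 <= MM rho * tt rho ^ n.
Proof. intros H. destruct (tt_props rho H) as [Ht Ht4]. set (t := tt rho) in *.
 rewrite <- Ht4, <- pow_mult. replace (4 * n)%nat with (n + n + n + n)%nat by lia.
 rewrite !pow_add. unfold MM; fold t.
 assert (Hb := lin_geo' t n Ht).
 assert (0 <= t ^ n <= 1) by (split; [apply pow_le|apply pow_le1]; lra).
 assert (0 <= (1 + INR n) * t ^ n) by (assert (0 <= INR n) by apply pos_INR; nra).
 assert (Hsq : ((1 + INR n) * t ^ n) ^ 2 <= (1 / (1 - t)) ^ 2) by (apply pow_incr; lra).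
 replace (1 / (1 - t) ^ 2) with ((1 / (1 - t)) ^ 2) by (field; lra).
 replace (t ^ n * t ^ n * t ^ n * t ^ n * (1 + INR n) ^ 2) with
   (((1 + INR n) * t ^ n) ^ 2 * (t ^ n * t ^ n)) by ring.
 assert (0 <= t ^ n * t ^ n <= t ^ n) by nra.
 assert (0 <= (1 / (1 - t)) ^ 2) by (apply pow_le; apply Rlt_le; apply Rdiv_lt_0_compat; lra).
 assert (0 <= ((1 + INR n) * t ^ n) ^ 2) by (apply pow_le; lra).
 nra.
Qed.

Lemma MM_pos rho : Rabs rho < 1 -> 0 <= MM rho.
Proof. intros H. destruct (tt_props rho H). unfold MM.
 apply Rlt_le, Rdiv_lt_0_compat; [lra|]. apply pow_lt; lra. Qed.

Lemma bnd0 rho n : Rabs rho < 1 -> Rabs (rho ^ n) <= MM rho * tt rho ^ n.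
Proof. intros H. eapply Rle_trans; [|apply key; auto]. rewrite <- RPow_abs.
 assert (0 <= Rabs rho ^ n) by (apply pow_le, Rabs_pos). assert (0 <= INR n) by apply pos_INR. nra. Qed.

Lemma bnd1 rho n : Rabs rho < 1 -> Rabs (rho ^ n * INR n) <= MM rho * tt rho ^ n.
Proof. intros H. eapply Rle_trans; [|apply key; auto]. rewrite Rabs_mult, <- RPow_abs.
 assert (0 <= Rabs rho ^ n) by (apply pow_le, Rabs_pos). assert (0 <= INR n) by apply pos_INR.
 rewrite (Rabs_right (INR n)) by lra. nra. Qed.

Lemma bnd2 rho n : Rabs rho < 1 -> Rabs (rho ^ n * INR n ^ 2) <= MM rho * tt rho ^ n.
Proof. intros H. eapply Rle_trans; [|apply key; auto]. rewrite Rabs_mult, <- RPow_abs.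
 assert (0 <= Rabs rho ^ n) by (apply pow_le, Rabs_pos). assert (0 <= INR n) by apply pos_INR.
 rewrite (Rabs_right (INR n ^ 2)) by (apply Rle_ge, pow_le; lra). nra. Qed.

Definition cv (b : nat -> R) t p := sum1 (fun j => b j ^ 2 * t ^ (p - j)) p.
Definition Gs t p := sum1 (fun j => t ^ (p - j)) p.

Lemma Gs_bound t p : 0 <= t < 1 -> 0 <= Gs t p <= 1 / (1 - t).
Proof. intros Ht. unfold Gs. induction p.
 - rewrite sum1_O. split; [lra|]. apply Rlt_le, Rdiv_lt_0_compat; lra.
 - rewrite sum1_S, Nat.sub_diag.
   rewrite (sum1_ext_loc _ (fun j => t * t ^ (p - j))).
   2:{ intros j Hj. replace (S p - j)%nat with (S (p - j)) by lia. reflexivity. }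
   rewrite sum1_scal. simpl pow.
   assert (1 / (1 - t) = t * (1 / (1 - t)) + 1) by (field; lra).
   nra.
Qed.

Lemma cv_nonneg b t p : 0 <= t -> 0 <= cv b t p.
Proof. intros Ht. unfold cv. apply sum1_nonneg. intros j _.
 apply Rmult_le_pos. apply pow2_ge_0. apply pow_le; auto. Qed.

Lemma cv_series b t : ex_series (fun n => b (S n) ^ 2) -> 0 <= t < 1 ->
  ex_series (fun n => cv b t (S n)).
Proof. intros Hb Ht.
 assert (Hm := is_series_mult_pos (fun n => b (S n) ^ 2) (fun n => t ^ n) _ _
   (Series_correct _ Hb) (is_series_geom t ltac:(rewrite Rabs_right; lra))
   (fun n => pow2_ge_0 _) (fun n => pow_le _ n (proj1 Ht))).
 eexists. eapply is_series_ext; [|exact Hm].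
 intros n. simpl. unfold cv. rewrite sum1_sum_n, sum_n_Reals. reflexivity.
Qed.

Lemma cv_lim b t : ex_series (fun n => b (S n) ^ 2) -> 0 <= t < 1 -> is_lim_seq (cv b t) 0.
Proof. intros Hb Ht. apply is_lim_seq_incr_1. apply ex_series_lim_0. apply cv_series; auto. Qed.


Lemma amgm_pt x y e C u v : 0 <= C -> 0 <= u -> 0 <= v -> Rabs e <= C * u * v ->
  Rabs (x * y * e) <= C / 2 * (x ^ 2 * u * v + u * (y ^ 2 * v)).
Proof. intros HC Hu Hv He. rewrite !Rabs_mult.
 assert (Hx : Rabs x * Rabs x = x ^ 2) by (rewrite <- Rabs_mult, Rabs_right; [ring| apply Rle_ge, Rle_0_sqr]).
 assert (Hy : Rabs y * Rabs y = y ^ 2) by (rewrite <- Rabs_mult, Rabs_right; [ring| apply Rle_ge, Rle_0_sqr]).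
 assert (0 <= Rabs x) by apply Rabs_pos. assert (0 <= Rabs y) by apply Rabs_pos.
 assert (2 * (Rabs x * Rabs y) <= x ^ 2 + y ^ 2) by (pose proof (Rle_0_sqr (Rabs x - Rabs y)); unfold Rsqr in *; nra).
 assert (Rabs x * Rabs y * Rabs e <= Rabs x * Rabs y * (C * u * v)) by (apply Rmult_le_compat_l; nra).
 assert (0 <= C * u * v) by (apply Rmult_le_pos; [apply Rmult_le_pos|]; auto).
 assert (Rabs x * Rabs y * (C * u * v) <= C / 2 * (x ^ 2 + y ^ 2) * u * v).
 { replace (C / 2 * (x ^ 2 + y ^ 2) * u * v) with ((x ^ 2 + y ^ 2) / 2 * (C * u * v)) by field.
   apply Rmult_le_compat_r; lra. }
 replace (C / 2 * (x ^ 2 * u * v + u * (y ^ 2 * v))) with (C / 2 * (x ^ 2 + y ^ 2) * u * v) by field.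
 lra.
Qed.

Lemma Q_abs_bound b t C (E : nat -> nat -> R) p :
  0 <= t < 1 -> 0 <= C ->
  (forall j j', (1 <= j <= p)%nat -> (1 <= j' <= p)%nat ->
     Rabs (E j j') <= C * t ^ (p - j) * t ^ (p - j')) ->
  Rabs (Q b E p) <= C / (1 - t) * cv b t p.
Proof. intros Ht HC HE. unfold Q.
 eapply Rle_trans. apply sum1_abs.
 eapply Rle_trans. apply sum1_le. intros j Hj. apply sum1_abs.
 eapply Rle_trans. apply sum1_le. intros j Hj. apply sum1_le. intros j' Hj'.
 apply (amgm_pt (b j) (b j') (E j j') C (t ^ (p - j)) (t ^ (p - j'))); auto.
 apply pow_le; lra. apply pow_le; lra.
 rewrite (sum1_ext _ (fun j => C / 2 * (b j ^ 2 * t ^ (p - j) * Gs t p + t ^ (p - j) * cv b t p))).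
 2:{ intros j. unfold Gs, cv. rewrite <- !sum1_scal, <- sum1_plus.
     rewrite <- sum1_scal. apply sum1_ext; intros j'. ring. }
 rewrite sum1_scal, sum1_plus, sum1_scal_r, sum1_scal_r.
 fold (cv b t p). change (sum1 (fun j => t ^ (p - j)) p) with (Gs t p).
 destruct (Gs_bound t p Ht). assert (0 <= cv b t p) by (apply cv_nonneg; lra).
 assert (C * Gs t p <= C * (1 / (1 - t))) by (apply Rmult_le_compat_l; auto).
 replace (C / (1 - t) * cv b t p) with (C * (1 / (1 - t)) * cv b t p) by (field; lra).
 nra.
Qed.

Lemma lim_scal (u : nat -> R) (a c : R) : is_lim_seq u a -> is_lim_seq (fun n => c * u n) (c * a).
Proof. intros H. pose proof (is_lim_seq_mult' (fun _ => c) u c a (is_lim_seq_const c) H) as H2. exact H2. Qed.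

Lemma err_lim b t C (E : nat -> nat -> nat -> R) :
  ex_series (fun n => b (S n) ^ 2) -> 0 <= t < 1 -> 0 <= C ->
  (forall p j j', (1 <= j <= p)%nat -> (1 <= j' <= p)%nat ->
     Rabs (E p j j') <= C * t ^ (p - j) * t ^ (p - j')) ->
  is_lim_seq (fun p => Q b (E p) p) 0.
Proof. intros Hb Ht HC HE.
 assert (H := fun p => Q_abs_bound b t C (E p) p Ht HC (HE p)).
 apply (is_lim_seq_le_le (fun p => - (C / (1 - t) * cv b t p)) _ (fun p => C / (1 - t) * cv b t p)).
 - intros p. specialize (H p). apply Rabs_le_between. auto.
 - replace (Finite 0) with (Finite (- (C / (1 - t) * 0))) by (f_equal; ring).
   apply (is_lim_seq_ext (fun p => (-1) * (C / (1 - t) * cv b t p))). intros; ring.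
   replace (- (C / (1 - t) * 0)) with ((-1) * (C / (1 - t) * 0)) by ring.
   apply lim_scal, lim_scal. apply cv_lim; auto.
 - replace (Finite 0) with (Finite (C / (1 - t) * 0)) by (f_equal; ring).
   apply lim_scal. apply cv_lim; auto.
Qed.

Lemma bsum_ex b t M (g : nat -> nat -> R) :
  ex_series (fun n => b (S n) ^ 2) -> 0 <= t < 1 -> 0 <= M ->
  (forall j j', (j < j')%nat -> Rabs (g j j') <= M * t ^ (j' - j)) ->
  ex_series (fun n => sum_n_m (fun j => b j * b (n + 2)%nat * g j (n + 2)%nat) 1 (n + 2 - 1)).
Proof. intros Hb Ht HM Hg.
 apply (@ex_series_le R_AbsRing R_CompleteNormedModule _ (fun n => M / 2 * (t * cv b t (S n) + b (S (S n)) ^ 2 * (1 / (1 - t))))).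
 - intros n. change (norm ?x) with (Rabs x).
   replace (n + 2 - 1)%nat with (S n) by lia. replace (n + 2)%nat with (S (S n)) by lia.
   change (sum_n_m ?f 1 (S n)) with (sum1 f (S n)).
   eapply Rle_trans. apply sum1_abs.
   eapply Rle_trans. apply sum1_le. intros j Hj.
   apply (amgm_pt (b j) (b (S (S n))) (g j (S (S n))) M t (t ^ (S n - j)) HM); try lra.
   apply pow_le; lra.
   replace (M * t * t ^ (S n - j)) with (M * t ^ (S (S n) - j)).
   apply Hg; lia. replace (S (S n) - j)%nat with (S (S n - j)) by lia. simpl. ring.
   rewrite (sum1_ext _ (fun j => M / 2 * (t * (b j ^ 2 * t ^ (S n - j)) + b (S (S n)) ^ 2 * t * t ^ (S n - j)))).
   2:{ intros j. ring. }
   rewrite sum1_scal, sum1_plus, sum1_scal, sum1_scal.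
   fold (cv b t (S n)). change (sum1 (fun j => t ^ (S n - j)) (S n)) with (Gs t (S n)).
   destruct (Gs_bound t (S n) Ht).
   assert (t * Gs t (S n) <= 1 / (1 - t)) by nra.
   assert (0 <= b (S (S n)) ^ 2) by apply pow2_ge_0.
   assert (b (S (S n)) ^ 2 * t * Gs t (S n) <= b (S (S n)) ^ 2 * (1 / (1 - t))).
   { rewrite Rmult_assoc. apply Rmult_le_compat_l; auto. }
   apply Rmult_le_compat_l; lra.
 - apply (ex_series_ext (fun n => (t * cv b t (S n) + b (S (S n)) ^ 2 * (1 / (1 - t))) * (M / 2))).
   intros n; exact (Rmult_comm _ _). apply ex_series_scal_r.
   eapply ex_series_ext; [|apply (ex_series_plus (fun n => cv b t (S n) * t) (fun n => b (S (S n)) ^ 2 * (1 / (1 - t))))].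
   intros n. change (plus ?x ?y) with (x + y). exact (f_equal (fun z => z + _) (Rmult_comm _ _)).
   + apply ex_series_scal_r. apply cv_series; auto.
   + apply ex_series_scal_r. apply ex_series_incr_1 in Hb. exact Hb.
Qed.

Lemma diag_ex b (h : nat -> R) K : ex_series (fun n => b (S n) ^ 2) ->
  (forall n, Rabs (h (S n)) <= K) -> ex_series (fun n => b (S n) ^ 2 * h (S n)).
Proof. intros Hb Hh.
 apply (@ex_series_le R_AbsRing R_CompleteNormedModule _ (fun n => b (S n) ^ 2 * K)).
 - intros n. change (norm ?x) with (Rabs x). rewrite Rabs_mult.
   rewrite (Rabs_right (b (S n) ^ 2)) by (apply Rle_ge, pow2_ge_0).
   apply Rmult_le_compat_l. apply pow2_ge_0. auto.
 - apply ex_series_scal_r. auto.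
Qed.


Lemma lim_eq (u : nat -> R) (a b : R) : is_lim_seq u a -> a = b -> is_lim_seq u b.
Proof. intros H ->; auto. Qed.

Lemma lim_plus (u v : nat -> R) (a b : R) : is_lim_seq u a -> is_lim_seq v b ->
  is_lim_seq (fun n => u n + v n) (a + b).
Proof. intros; apply is_lim_seq_plus'; auto. Qed.

Lemma sqpow x j : (x ^ 2) ^ j = x ^ j * x ^ j.
Proof. replace (x ^ 2) with (x * x) by ring. apply Rpow_mult_distr. Qed.

Lemma absdiff_lt j j' : (j < j')%nat -> absdiff j j' = (j' - j)%nat.
Proof. intros; unfold absdiff; destruct (Nat.leb_spec j j'); lia. Qed.

Lemma rho_le1 rho n : Rabs rho < 1 -> Rabs (rho ^ n) <= 1.
Proof. intros H. rewrite <- RPow_abs. apply pow_le1. split; [apply Rabs_pos|lra]. Qed.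

Lemma tprops rho : Rabs rho < 1 -> 0 <= tt rho < 1.
Proof. intros H; apply tt_props; auto. Qed.

Lemma term_bound x y g X Y G : Rabs x <= X -> Rabs y <= Y -> Rabs g <= G -> Rabs (x * y * g) <= X * Y * G.
Proof. intros. rewrite !Rabs_mult.
 assert (0 <= Rabs x) by apply Rabs_pos. assert (0 <= Rabs y) by apply Rabs_pos. assert (0 <= Rabs g) by apply Rabs_pos.
 apply Rmult_le_compat; try apply Rmult_le_pos; auto. apply Rmult_le_compat; auto. Qed.

Lemma part1 beta rho : ex_series (fun n => beta (S n) ^ 2) -> Rabs rho < 1 ->
  is_lim_seq (fun p => kappa1 beta rho p) (Finite (betaf beta 1 + 2 * b1 beta rho)).
Proof. intros Hb Hr. assert (Ht := tprops rho Hr). assert (HM := MM_pos rho Hr).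
 apply (is_lim_seq_ext (fun p => Dg beta (fun j => 1 ^ j) p + 2 * Tr beta (fun j j' => rho ^ (j' - j)) p)).
 - intros p. rewrite kappa1_Q, Q_sym by (intros; apply A_sym). f_equal.
   + unfold Dg. apply sum1_ext; intros j. unfold A. rewrite pow1. replace (absdiff j j) with 0%nat by ad. simpl; ring.
   + f_equal. apply Tr_ext_lt. intros j j' H. unfold A. rewrite absdiff_lt; auto.
 - apply lim_plus.
   + apply Dg_lim. apply (diag_ex _ _ 1 Hb). intros n. rewrite pow1, Rabs_R1. lra.
   + apply lim_scal. apply Tr_lim. apply (bsum_ex _ (tt rho) (MM rho) (fun j j' => rho ^ (j' - j))); auto.
     intros j j' _. apply bnd0; auto.
Qed.

Definition K2inf rho j j' := rho ^ absdiff j j' * (cc rho + INR (absdiff j j')) - rho ^ j * rho ^ j' / (1 - rho ^ 2).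
Definition E2 rho p j j' := rho ^ (p - j) * rho ^ (p - j') * (- rho ^ 2 / (1 - rho ^ 2)).

Lemma part2 beta rho : ex_series (fun n => beta (S n) ^ 2) -> Rabs rho < 1 ->
  is_lim_seq (fun p => kappa2 beta rho p)
    (Finite (betaf beta 1 * ((1 + rho ^ 2) / (1 - rho ^ 2))
             - betaf beta (rho ^ 2) * (1 / (1 - rho ^ 2))
             + 2 * (b1d beta rho + b1 beta rho * ((1 + rho ^ 2) / (1 - rho ^ 2))
                    - b2 beta rho * (1 / (1 - rho ^ 2))))).
Proof. intros Hb Hr. assert (Ht := tprops rho Hr). assert (HM := MM_pos rho Hr).
 assert (Hr2 : rho ^ 2 < 1).
 { rewrite <- (Rabs_right (rho ^ 2)) by (apply Rle_ge, pow2_ge_0). rewrite <- RPow_abs.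
   assert (0 <= Rabs rho) by apply Rabs_pos. nra. }
 assert (HD : 0 < 1 - rho ^ 2) by lra.
 set (D := 1 - rho ^ 2) in *.
 apply (is_lim_seq_ext (fun p =>
    (cc rho * Dg beta (fun j => 1 ^ j) p + (- / D) * Dg beta (fun j => (rho ^ 2) ^ j) p
    + 2 * (Tr beta (fun j j' => rho ^ (j' - j) * INR (j' - j)) p
           + cc rho * Tr beta (fun j j' => rho ^ (j' - j)) p
           + (- / D) * Tr beta (fun j j' => rho ^ (j' + j)) p))
    + Q beta (E2 rho p) p)).
 - intros p. symmetry. rewrite kappa2_Q.
   rewrite (Q_ext_loc _ _ (fun j j' => K2inf rho j j' + E2 rho p j j')).
   2:{ intros j j' Hj Hj'. rewrite K2_closed by (auto; lra). unfold K2c, K2inf, E2. fold D. field. lra. }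
   rewrite Q_plus. f_equal.
   rewrite Q_sym. 2:{ intros j j'. unfold K2inf. rewrite (absdiff_sym j j'). rewrite (Rmult_comm (rho ^ j)). reflexivity. }
   f_equal.
   + rewrite <- !Dg_scal, <- Dg_plus. unfold Dg. apply sum1_ext; intros j.
     unfold K2inf. replace (absdiff j j) with 0%nat by ad. rewrite pow1, sqpow. fold D. simpl. field. lra.
   + f_equal. rewrite <- !Tr_scal, <- !Tr_plus. apply Tr_ext_lt. intros j j' H.
     unfold K2inf. rewrite absdiff_lt by auto. rewrite (Nat.add_comm j' j), pow_add. fold D. field. lra.
 - apply (lim_eq _ ((cc rho * betaf beta 1 + (- / D) * betaf beta (rho ^ 2)
     + 2 * (b1d beta rho + cc rho * b1 beta rho + (- / D) * b2 beta rho)) + 0)).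
   2:{ unfold cc. fold D. field. lra. }
   apply lim_plus.
   + apply lim_plus.
     * apply lim_plus; apply lim_scal; apply Dg_lim; apply (diag_ex _ _ 1 Hb); intros n.
       rewrite pow1, Rabs_R1; lra.
       rewrite <- RPow_abs. apply pow_le1. split; [apply Rabs_pos|]. rewrite Rabs_right by (apply Rle_ge, pow2_ge_0). lra.
     * apply lim_scal. apply lim_plus; [apply lim_plus|].
       -- apply Tr_lim. apply (bsum_ex _ (tt rho) (MM rho) (fun j j' => rho ^ (j' - j) * INR (j' - j))); auto.
          intros j j' _. apply bnd1; auto.
       -- apply lim_scal. apply Tr_lim. apply (bsum_ex _ (tt rho) (MM rho) (fun j j' => rho ^ (j' - j))); auto.
          intros j j' _. apply bnd0; auto.
       -- apply lim_scal. apply Tr_lim. apply (bsum_ex _ (tt rho) (MM rho) (fun j j' => rho ^ (j' + j))); auto.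
          intros j j' _. eapply Rle_trans. apply bnd0; auto.
          apply Rmult_le_compat_l; auto. apply pow_decr; [lra|lia].
   + apply (err_lim _ (tt rho) (MM rho * MM rho * (1 / D))); auto.
     apply Rmult_le_pos. apply Rmult_le_pos; auto. apply Rlt_le, Rdiv_lt_0_compat; lra.
     intros p j j' Hj Hj'. unfold E2. fold D.
     replace (MM rho * MM rho * (1 / D) * tt rho ^ (p - j) * tt rho ^ (p - j'))
       with ((MM rho * tt rho ^ (p - j)) * (MM rho * tt rho ^ (p - j')) * (1 / D)) by ring.
     apply term_bound; try apply bnd0; auto.
     rewrite Rabs_div by lra. rewrite Rabs_Ropp, (Rabs_right D) by lra.
     unfold Rdiv. apply Rmult_le_compat_r. apply Rlt_le, Rinv_0_lt_compat; lra.
     rewrite Rabs_right by (apply Rle_ge, pow2_ge_0). lra.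
Qed.

Definition K3inf rho j j' :=
  rho ^ absdiff j j' * (c1 rho + 3/2 * cc rho * INR (absdiff j j') + INR (absdiff j j') ^ 2 / 2)
  - rho ^ j * rho ^ j' * (c2 rho + (INR j + INR j') / (1 - rho^2)).
Definition E3 rho p j j' :=
  - rho ^ (p - j) * rho ^ (p - j') * rho ^ 2 * (c2 rho + (INR (p - j) + INR (p - j') + 2) / (1 - rho^2))
  + rho ^ (p - j) * rho ^ (p - j') * rho ^ 2 * (rho ^ j * rho ^ j + rho ^ j' * rho ^ j') / (1 - rho^2)^2.

Lemma abs_sum6 a b c d e f : Rabs (a + b + c + d + e + f) <= Rabs a + Rabs b + Rabs c + Rabs d + Rabs e + Rabs f.
Proof. repeat (eapply Rle_trans; [apply Rabs_triang|apply Rplus_le_compat_r]). apply Rle_refl. Qed.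

Lemma E3_bound rho p j j' : Rabs rho < 1 -> (1 <= j <= p)%nat -> (1 <= j' <= p)%nat ->
  Rabs (E3 rho p j j') <= 6 * (MM rho * MM rho * (Rabs (c2 rho) + 2 / (1 - rho^2) + 1 / (1 - rho^2)^2))
     * tt rho ^ (p - j) * tt rho ^ (p - j').
Proof. intros Hr Hj Hj'.
 assert (Hr2 : rho ^ 2 < 1).
 { rewrite <- (Rabs_right (rho ^ 2)) by (apply Rle_ge, pow2_ge_0). rewrite <- RPow_abs.
   assert (0 <= Rabs rho) by apply Rabs_pos. nra. }
 assert (HD : 0 < 1 - rho ^ 2) by lra.
 set (D := 1 - rho ^ 2) in *.
 set (G := Rabs (c2 rho) + 2 / D + 1 / D ^ 2).
 assert (HD1 : 0 < 1 / D) by (apply Rdiv_lt_0_compat; lra).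
 assert (HD2 : 0 < 1 / D ^ 2) by (apply Rdiv_lt_0_compat; [lra|apply pow_lt; lra]).
 assert (Hc2 : 0 <= Rabs (c2 rho)) by apply Rabs_pos.
 assert (Hp2 : Rabs (rho ^ 2) <= 1) by (apply rho_le1; auto).
 assert (Hpj : Rabs (rho ^ j) <= 1) by (apply rho_le1; auto).
 assert (Hpj' : Rabs (rho ^ j') <= 1) by (apply rho_le1; auto).
 set (a := (p - j)%nat). set (b := (p - j')%nat).
 assert (E : E3 rho p j j' =
   rho ^ a * rho ^ b * (- rho ^ 2 * c2 rho)
   + rho ^ a * rho ^ b * (- rho ^ 2 * 2 / D)
   + (rho ^ a * INR a) * rho ^ b * (- rho ^ 2 / D)
   + rho ^ a * (rho ^ b * INR b) * (- rho ^ 2 / D)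
   + rho ^ a * rho ^ b * (rho ^ 2 * (rho ^ j * rho ^ j) / D ^ 2)
   + rho ^ a * rho ^ b * (rho ^ 2 * (rho ^ j' * rho ^ j') / D ^ 2)).
 { unfold E3. fold D. fold a b. field. lra. }
 rewrite E. eapply Rle_trans. apply abs_sum6.
 set (X := MM rho * tt rho ^ a). set (Y := MM rho * tt rho ^ b).
 assert (Ha0 : Rabs (rho ^ a) <= X) by (apply bnd0; auto).
 assert (Ha1 : Rabs (rho ^ a * INR a) <= X) by (apply bnd1; auto).
 assert (Hb0 : Rabs (rho ^ b) <= Y) by (apply bnd0; auto).
 assert (Hb1 : Rabs (rho ^ b * INR b) <= Y) by (apply bnd1; auto).
 assert (Hg : forall g, Rabs g <= G -> forall x y, Rabs x <= X -> Rabs y <= Y -> Rabs (x * y * g) <= X * Y * G).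
 { intros. apply term_bound; auto. }
 assert (H1 : Rabs (- rho ^ 2 * c2 rho) <= G).
 { rewrite Rabs_mult, Rabs_Ropp. unfold G. assert (0 <= Rabs (rho^2)) by apply Rabs_pos. nra. }
 assert (H2 : Rabs (- rho ^ 2 * 2 / D) <= G).
 { unfold Rdiv. rewrite !Rabs_mult, Rabs_Ropp, Rabs_right with (r := 2) by lra.
   rewrite Rabs_right with (r := / D) by (apply Rle_ge, Rlt_le, Rinv_0_lt_compat; lra).
   unfold G. assert (0 <= Rabs (rho^2)) by apply Rabs_pos.
   assert (2 / D = 2 * / D) by reflexivity. assert (0 < / D) by (apply Rinv_0_lt_compat; lra). nra. }
 assert (H3 : Rabs (- rho ^ 2 / D) <= G).
 { unfold Rdiv. rewrite !Rabs_mult, Rabs_Ropp.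
   rewrite Rabs_right with (r := / D) by (apply Rle_ge, Rlt_le, Rinv_0_lt_compat; lra).
   unfold G. assert (0 <= Rabs (rho^2)) by apply Rabs_pos.
   assert (2 / D = 2 * / D) by reflexivity. assert (0 < / D) by (apply Rinv_0_lt_compat; lra). nra. }
 assert (H4 : forall q, Rabs (rho ^ q) <= 1 -> Rabs (rho ^ 2 * (rho ^ q * rho ^ q) / D ^ 2) <= G).
 { intros q Hq. unfold Rdiv. rewrite !Rabs_mult.
   rewrite Rabs_right with (r := / D ^ 2) by (apply Rle_ge, Rlt_le, Rinv_0_lt_compat, pow_lt; lra).
   assert (0 <= Rabs (rho^2)) by apply Rabs_pos. assert (0 <= Rabs (rho^q)) by apply Rabs_pos.
   assert (1 / D ^ 2 = / D ^ 2) by (unfold Rdiv; ring). assert (0 < / D ^ 2) by (apply Rinv_0_lt_compat, pow_lt; lra).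
   assert (Rabs (rho ^ 2) * (Rabs (rho ^ q) * Rabs (rho ^ q)) <= 1).
   { assert (Rabs (rho ^ q) * Rabs (rho ^ q) <= 1) by nra. nra. }
   unfold G. assert (0 <= 2 / D) by lra. nra. }
 assert (T1 := Hg _ H1 _ _ Ha0 Hb0).
 assert (T2 := Hg _ H2 _ _ Ha0 Hb0).
 assert (T3 := Hg _ H3 _ _ Ha1 Hb0).
 assert (T4 := Hg _ H3 _ _ Ha0 Hb1).
 assert (T5 := Hg _ (H4 j Hpj) _ _ Ha0 Hb0).
 assert (T6 := Hg _ (H4 j' Hpj') _ _ Ha0 Hb0).
 replace (6 * (MM rho * MM rho * G) * tt rho ^ a * tt rho ^ b)
   with (6 * (X * Y * G)) by (unfold X, Y, G; ring).
 lra.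
Qed.

Lemma part3 beta rho : ex_series (fun n => beta (S n) ^ 2) -> Rabs rho < 1 ->
  is_lim_seq (fun p => kappa3 beta rho p)
    (Finite (1 / (1 - rho ^ 2) ^ 2 *
               ((1 + 4 * rho ^ 2 + rho ^ 4) * (betaf beta 1 + 2 * b1 beta rho)
                - (1 + 3 * rho ^ 2) * (betaf beta (rho ^ 2) + 2 * b2 beta rho))
             + 1 / (1 - rho ^ 2) *
               (3 * b1d beta rho * (1 + rho ^ 2)
                - 2 * (b2d beta rho + betaf1 beta (rho ^ 2)))
             + b2nd beta rho)).
Proof. intros Hb Hr. assert (Ht := tprops rho Hr). assert (HM := MM_pos rho Hr).
 assert (Hr2 : rho ^ 2 < 1).
 { rewrite <- (Rabs_right (rho ^ 2)) by (apply Rle_ge, pow2_ge_0). rewrite <- RPow_abs.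
   assert (0 <= Rabs rho) by apply Rabs_pos. nra. }
 assert (HD : 0 < 1 - rho ^ 2) by lra.
 set (D := 1 - rho ^ 2) in *.
 apply (is_lim_seq_ext (fun p =>
    (c1 rho * Dg beta (fun j => 1 ^ j) p + (- c2 rho) * Dg beta (fun j => (rho ^ 2) ^ j) p
     + (- 2 / D) * Dg beta (fun j => INR j * (rho ^ 2) ^ j) p
    + 2 * (c1 rho * Tr beta (fun j j' => rho ^ (j' - j)) p
           + (3 / 2 * cc rho) * Tr beta (fun j j' => rho ^ (j' - j) * INR (j' - j)) p
           + (1 / 2) * Tr beta (fun j j' => rho ^ (j' - j) * INR (j' - j) ^ 2) p
           + (- c2 rho) * Tr beta (fun j j' => rho ^ (j' + j)) p
           + (- / D) * Tr beta (fun j j' => rho ^ (j' + j) * INR (j' + j)) p))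
    + Q beta (E3 rho p) p)).
 - intros p. symmetry. rewrite kappa3_Q.
   rewrite (Q_ext_loc _ _ (fun j j' => K3inf rho j j' + E3 rho p j j')).
   2:{ intros j j' Hj Hj'. rewrite K3_closed by (auto; lra). unfold K3c, K3inf, E3. fold D. field. lra. }
   rewrite Q_plus. f_equal.
   rewrite Q_sym. 2:{ intros j j'. unfold K3inf. rewrite (absdiff_sym j j'), (Rmult_comm (rho ^ j)), (Rplus_comm (INR j)). reflexivity. }
   f_equal.
   + rewrite <- !Dg_scal, <- !Dg_plus. unfold Dg. apply sum1_ext; intros j.
     unfold K3inf. replace (absdiff j j) with 0%nat by ad. rewrite pow1, sqpow. fold D.
     rewrite INR_0. simpl. field. lra.
   + f_equal. rewrite <- !Tr_scal, <- !Tr_plus. apply Tr_ext_lt. intros j j' H.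
     unfold K3inf. rewrite absdiff_lt by auto. rewrite (Nat.add_comm j' j), pow_add, plus_INR. fold D. field. lra.
 - apply (lim_eq _ ((c1 rho * betaf beta 1 + (- c2 rho) * betaf beta (rho ^ 2) + (- 2 / D) * betaf1 beta (rho ^ 2)
     + 2 * (c1 rho * b1 beta rho + (3 / 2 * cc rho) * b1d beta rho + (1 / 2) * b2nd beta rho
            + (- c2 rho) * b2 beta rho + (- / D) * b2d beta rho)) + 0)).
   2:{ unfold c1, c2, cc. fold D. field. lra. }
   assert (Hsq : forall n, Rabs ((rho ^ 2) ^ n) <= 1).
   { intros n. rewrite <- RPow_abs. apply pow_le1. split; [apply Rabs_pos|].
     rewrite Rabs_right by (apply Rle_ge, pow2_ge_0). lra. }
   apply lim_plus.
   + apply lim_plus.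
     * apply lim_plus; [apply lim_plus|]; apply lim_scal.
       -- apply Dg_lim. apply (diag_ex _ _ 1 Hb). intros n. rewrite pow1, Rabs_R1; lra.
       -- apply Dg_lim. apply (diag_ex _ _ 1 Hb). intros n. apply Hsq.
       -- apply (lim_eq _ (Series (fun n => beta (S n) ^ 2 * (INR (S n) * (rho ^ 2) ^ (S n))))).
          apply Dg_lim. apply (diag_ex _ (fun j => INR j * (rho ^ 2) ^ j) (MM rho) Hb). intros n.
          rewrite sqpow. replace (INR (S n) * (rho ^ S n * rho ^ S n)) with ((rho ^ S n * INR (S n)) * rho ^ S n) by ring.
          rewrite Rabs_mult. assert (H1 := bnd1 rho (S n) Hr). assert (H2 := rho_le1 rho (S n) Hr).
          assert (tt rho ^ S n <= 1) by (apply pow_le1; lra). assert (0 <= Rabs (rho ^ S n)) by apply Rabs_pos.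
          assert (0 <= Rabs (rho ^ S n * INR (S n))) by apply Rabs_pos. nra.
          unfold betaf1. apply Series_ext. intros n. simpl. ring.
     * apply lim_scal.
       repeat apply lim_plus; try apply lim_scal; apply Tr_lim.
       -- apply (bsum_ex _ (tt rho) (MM rho) (fun j j' => rho ^ (j' - j))); auto.
          intros j j' _. apply bnd0; auto.
       -- apply (bsum_ex _ (tt rho) (MM rho) (fun j j' => rho ^ (j' - j) * INR (j' - j))); auto.
          intros j j' _. apply bnd1; auto.
       -- apply (bsum_ex _ (tt rho) (MM rho) (fun j j' => rho ^ (j' - j) * INR (j' - j) ^ 2)); auto.
          intros j j' _. apply bnd2; auto.
       -- apply (bsum_ex _ (tt rho) (MM rho) (fun j j' => rho ^ (j' + j))); auto.
          intros j j' _. eapply Rle_trans. apply bnd0; auto.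
          apply Rmult_le_compat_l; auto. apply pow_decr; [lra|lia].
       -- apply (bsum_ex _ (tt rho) (MM rho) (fun j j' => rho ^ (j' + j) * INR (j' + j))); auto.
          intros j j' _. eapply Rle_trans. apply bnd1; auto.
          apply Rmult_le_compat_l; auto. apply pow_decr; [lra|lia].
   + apply (err_lim _ (tt rho) (6 * (MM rho * MM rho * (Rabs (c2 rho) + 2 / D + 1 / D ^ 2)))); auto.
     assert (0 < 2 / D) by (apply Rdiv_lt_0_compat; lra).
     assert (0 < 1 / D ^ 2) by (apply Rdiv_lt_0_compat; [lra|apply pow_lt; lra]).
     assert (0 <= Rabs (c2 rho)) by apply Rabs_pos.
     assert (0 <= MM rho * MM rho) by (apply Rmult_le_pos; auto). nra.
     intros p j j' Hj Hj'. apply E3_bound; auto.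
Qed.

Theorem mainTheorem8 (beta : nat -> R) (rho : R) :
  ex_series (fun n => beta (S n) ^ 2) ->
  Rabs rho < 1 ->
  is_lim_seq (fun p => kappa1 beta rho p)
    (Finite (betaf beta 1 + 2 * b1 beta rho)) /\
  is_lim_seq (fun p => kappa2 beta rho p)
    (Finite (betaf beta 1 * ((1 + rho ^ 2) / (1 - rho ^ 2))
             - betaf beta (rho ^ 2) * (1 / (1 - rho ^ 2))
             + 2 * (b1d beta rho + b1 beta rho * ((1 + rho ^ 2) / (1 - rho ^ 2))
                    - b2 beta rho * (1 / (1 - rho ^ 2))))) /\
  is_lim_seq (fun p => kappa3 beta rho p)
    (Finite (1 / (1 - rho ^ 2) ^ 2 *
               ((1 + 4 * rho ^ 2 + rho ^ 4) * (betaf beta 1 + 2 * b1 beta rho)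
                - (1 + 3 * rho ^ 2) * (betaf beta (rho ^ 2) + 2 * b2 beta rho))
             + 1 / (1 - rho ^ 2) *
               (3 * b1d beta rho * (1 + rho ^ 2)
                - 2 * (b2d beta rho + betaf1 beta (rho ^ 2)))
             + b2nd beta rho)).
Proof. intros Hb Hr. split; [|split].
 - apply part1; auto.
 - apply part2; auto.
 - apply part3; auto.
Qed.
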